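(* Let $U=\{u_1,\dots,u_{2^m}\}\subseteq\mathbb{F}_2^n\setminus\{0\}$ be a set of $2^m$ distinct nonzero vectors, let $B:\mathbb{F}_2^n\to\mathbb{F}_2^m$ be a uniformly random linear map, fix $y\in\mathbb{F}_2^m$, and let $Z_y:=|\{i:Bu_i=y\}|$. Then for every integer $a\ge1$, \[ \Pr[Z_y>2^a-2]\le\gamma^{-1}2^{-a^2}, \] where $\gamma:=\prod_{j=1}^\infty(1-2^{-j})$.
   Context: A uniformly random linear map $\mathbb{F}_2^n\to\mathbb{F}_2^m$ is one chosen uniformly among all linear maps. *)

(* Defs.v *)
From HB Require Import structures.
From mathcomp Require Import all_boot all_order all_algebra.
From mathcomp Require Import all_classical all_reals all_analysis.
Set Implicit Arguments. Unset Strict Implicit. Unset Printing Implicit Defensive.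
Import Order.TTheory GRing.Theory Num.Theory numFieldTopology.Exports numFieldNormedType.Exports.
Local Open Scope ring_scope.

(* Vectors of F_2^n are row vectors 'rV['F_2]_n; a linear map F_2^n -> F_2^m
   is represented by its matrix B : 'M['F_2]_(n, m), acting by v |-> v *m B.
   The uniformly random linear map is the uniform distribution on the finite
   type of all such matrices (linear maps <-> matrices bijectively). *)

Definition gamma_const (R : realType) : R :=
  limn (fun N : nat => \prod_(j < N) (1 - (2%:R ^- j.+1) : R)).

Definition Zcount (n m : nat) (U : {set 'rV['F_2]_n}) (y : 'rV['F_2]_m)
  (B : 'M['F_2]_(n, m)) : nat := #|[set u in U | u *m B == y]|.

Definition prob_linmap (R : realType) (n m : nat) (E : pred 'M['F_2]_(n, m)) : R :=
  (#|[set B | E B]|%:R) / (#|{: 'M['F_2]_(n, m)}|%:R).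

(* Main.v *)
Require Import Defs.
From HB Require Import structures.
From mathcomp Require Import all_boot all_order all_algebra.
From mathcomp Require Import all_classical all_reals all_analysis.
Import Order.TTheory GRing.Theory Num.Theory.
Import numFieldTopology.Exports numFieldNormedType.Exports.
Local Open Scope ring_scope.
From mathcomp Require Import zify ring lra.
From Stdlib Require Import Lia.
Set Implicit Arguments. Unset Strict Implicit. Unset Printing Implicit Defensive.



Lemma card_F2 : #|'F_2| = 2%N.
Proof. by rewrite card_Fp. Qed.

Lemma card_M2 p q : #|{: 'M['F_2]_(p, q)}| = (2 ^ (p * q))%N.
Proof. by rewrite card_mx card_F2. Qed.

Lemma span_card n k (T : 'M['F_2]_(k, n)) :
  (#|[set v : 'rV['F_2]_n | (v <= T)%MS]| <= 2 ^ k)%N.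
Proof.
apply: (@leq_trans #|[set w *m T | w in [set: 'rV['F_2]_k]]|).
  apply: subset_leq_card; apply/fintype.subsetP => v; rewrite inE => /submxP [w ->].
  by apply: imset_f; rewrite inE.
apply: leq_trans (leq_imset_card _ _) _.
by rewrite cardsT card_M2 mul1n.
Qed.

Lemma row_free_ext n k (T : 'M['F_2]_(k, n)) (v : 'rV['F_2]_n) :
  row_free T -> ~~ (v <= T)%MS -> row_free (col_mx v T : 'M['F_2]_((1 + k)%N, n)).
Proof.
move=> fT vT.
have v0 : v != 0 by apply: contraNneq vT => ->; rewrite sub0mx.
have H0 : (v :&: T <= (0 : 'M['F_2]_n))%MS.
  rewrite submx0; apply: contraNT vT => nz.
  have [_ e] := mxrank_leqif_sup (capmxSl v T).
  have : \rank (v :&: T)%MS == \rank v.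
    rewrite eqn_leq mxrankS ?capmxSl //= rank_rV v0 /= lt0n mxrank_eq0 //.
  by rewrite e => /submx_trans; apply; apply: capmxSr.
have [_ e] := mxrank_adds_leqif v T.
rewrite /row_free -addsmxE.
move: e; rewrite H0 => /eqP ->.
by rewrite rank_rV v0 (eqP fT).
Qed.

Definition Ind n k (S : {set 'rV['F_2]_n}) : {set 'M['F_2]_(k, n)} :=
  [set T | row_free T && [forall i, row i T \in S]].

Lemma Ind_ext n k (S : {set 'rV['F_2]_n}) T v :
  T \in Ind k S -> v \in S -> ~~ (v <= T)%MS ->
  (col_mx v T : 'M['F_2]_(k.+1, n)) \in Ind k.+1 S.
Proof.
rewrite !inE => /andP [fT /forallP rT] vS vT.
rewrite (row_free_ext fT vT) /=; apply/forallP => i.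
rewrite -(splitK (i : 'I_((1 + k)%N))); case: (fintype.split (i : 'I_((1 + k)%N))) => j /=.
  rewrite (@rowKu _ 1%N k n j v T); suff -> : row j v = v by [].
  by apply/rowP => l; rewrite !mxE ord1.
by rewrite (@rowKd _ 1%N k n j v T).
Qed.

Lemma Ind_ge n (S : {set 'rV['F_2]_n}) : 0 \notin S -> forall k,
  (\prod_(i < k) (#|S| - (2 ^ i - 1)) <= #|Ind k S|)%N.
Proof.
move=> S0; elim=> [|k IH].
  rewrite big_ord0 card_gt0; apply/set0Pn; exists 0; rewrite inE.
  apply/andP; split; last by apply/forallP => [[]].
  by rewrite /row_free mxrank0.
rewrite big_ord_recr /=.
set c := (#|S| - (2 ^ k - 1))%N.
apply: (@leq_trans (#|Ind k S| * c)); first by rewrite leq_mul2r IH orbT.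
pose B (T : 'M['F_2]_(k, n)) := [set v : 'rV['F_2]_n | (v <= T)%MS].
apply: (@leq_trans (\sum_(T in Ind k S) #|S :\: B T|)).
  rewrite -sum_nat_const; apply: leq_sum => T _.
  have := cardsID (B T) S.
  have : (#|S :&: B T| <= 2 ^ k - 1)%N.
    apply: (@leq_trans #|B T :\ 0|).
      apply: subset_leq_card; apply/fintype.subsetP => v; rewrite !inE => /andP [vS ->].
      by rewrite andbT; apply: contraNneq S0 => <-.
    have e := cardsD1 0 (B T); rewrite [0 \in B T]inE sub0mx add1n in e.
    have h := span_card T; change (is_true (#|B T| <= 2 ^ k)%N) in h.
    rewrite e in h; move: h; move: (#|B T :\ 0|) => x; lia.
  rewrite /c; move: #|S :&: B T| #|S :\: B T| #|S| => p q r; lia.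
pose P := [set p : 'M['F_2]_(k, n) * 'rV['F_2]_n | (p.1 \in Ind k S) && (p.2 \in S :\: B p.1)].
apply: (@leq_trans #|P|).
  rewrite (eq_bigr (fun T => \sum_(v in S :\: B T) 1)%N); last by move=> T _; rewrite sum1_card.
  rewrite pair_big_dep /= -sum1_card; apply: eq_leq; apply: eq_bigl => p.
  by rewrite [p \in P]inE.
pose f (p : 'M['F_2]_(k, n) * 'rV['F_2]_n) := (col_mx p.2 p.1 : 'M['F_2]_(k.+1, n)).
have fi : injective f.
  by move=> [T1 v1] [T2 v2]; rewrite /f /= => e; case: (@eq_col_mx _ 1%N k n v1 T1 v2 T2 e) => -> ->.
rewrite -(card_imset _ fi); apply: subset_leq_card; apply/fintype.subsetP => M.
case/imsetP => [[T v]] pP ->; move: pP; rewrite [_ \in P]inE /= => /andP [TI vBS].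
have vS : v \in S by move: vBS; rewrite inE => /andP [].
have vB : ~~ (v <= T)%MS by move: vBS; rewrite !inE => /andP [].
exact: (Ind_ext TI vS vB).
Qed.

Lemma fiber n a m (T : 'M['F_2]_(a, n)) (Y : 'M['F_2]_(a, m)) : row_free T ->
  (#|[set B : 'M['F_2]_(n, m) | T *m B == Y]| * 2 ^ (a * m) = 2 ^ (n * m))%N.
Proof.
move=> fT; set K := [set B : 'M['F_2]_(n, m) | T *m B == 0].
have eqf : forall Y', #|[set B : 'M['F_2]_(n, m) | T *m B == Y']| = #|K|.
  move=> Y'; pose g (B : 'M['F_2]_(n, m)) := B + pinvmx T *m Y'.
  have gi : injective g by move=> x z; apply: addIr.
  rewrite -[#|K|](card_imset _ gi); apply: eq_card => B; rewrite inE.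
  apply/eqP/imsetP.
    move=> h; exists (B - pinvmx T *m Y'); last by rewrite /g subrK.
    by rewrite inE mulmxBr h mulmxA mulmxVp // mul1mx subrr.
  case=> B0; rewrite inE => /eqP h ->.
  by rewrite /g mulmxDr h add0r mulmxA mulmxVp // mul1mx.
rewrite eqf -!card_M2 -[#|{: 'M['F_2]_(n, m)}|]sum1_card.
rewrite (partition_big (fun B => T *m B) predT) //=.
rewrite (eq_bigr (fun _ => #|K|)); last first.
  move=> Y0 _; rewrite sum1dep_card -(eqf Y0); apply: eq_card => B; rewrite !inE //.
rewrite sum_nat_const mulnC; congr (_ * _)%N; apply: eq_card => x; rewrite !inE.
Qed.

Definition SB n m (U : {set 'rV['F_2]_n}) (y : 'rV['F_2]_m) (B : 'M['F_2]_(n, m)) :=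
  [set u in U | u *m B == y].

Lemma Ind_SB n m a (U : {set 'rV['F_2]_n}) (y : 'rV['F_2]_m) (B : 'M['F_2]_(n, m)) T :
  (T \in Ind a (SB U y B)) =
  (T \in Ind a U) && (T *m B == \matrix_(i < a, j < m) y 0 j).
Proof.
have rY : forall i, row i (\matrix_(i < a, j < m) y 0 j) = y.
  by move=> i; apply/matrixP => x j; rewrite !mxE (ord1 x).
have -> : (T *m B == \matrix_(i < a, j < m) y 0 j) = [forall i, row i T *m B == y].
  apply/eqP/forallP => [h i|h]; first by rewrite -row_mul h rY.
  by apply/row_matrixP => i; rewrite row_mul (eqP (h i)) rY.
rewrite !inE -andbA; congr (_ && _).
apply/forallP/andP => [h|[/forallP h1 /forallP h2] i].
  by split; apply/forallP => i; have := h i; rewrite !inE => /andP [].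
by rewrite !inE h1 h2.
Qed.

Lemma card_Ind n a (U : {set 'rV['F_2]_n}) : (#|Ind a U| <= #|U| ^ a)%N.
Proof.
pose f (T : 'M['F_2]_(a, n)) : {ffun 'I_a -> 'rV['F_2]_n} := [ffun i => row i T].
have fi : injective f.
  by move=> T1 T2 e; apply/row_matrixP => i; have := congr1 (fun g : {ffun 'I_a -> 'rV['F_2]_n} => g i) e; rewrite !ffunE.
rewrite -(card_imset _ fi) -[a in (_ ^ a)%N]card_ord -card_ffun_on.
apply: subset_leq_card; apply/fintype.subsetP => g /imsetP [T]; rewrite inE => /andP [_ /forallP h] ->.
by apply/ffun_onP => i; rewrite ffunE.
Qed.

Lemma main_count n m (U : {set 'rV['F_2]_n}) (HU : #|U| = (2 ^ m)%N)
  (HU0 : 0 \notin U) (y : 'rV['F_2]_m) (a : nat) :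
  (\prod_(i < a) (2 ^ a - 2 ^ i) *
     #|[set B : 'M['F_2]_(n, m) | (2 ^ a - 2 < #|SB U y B|)%N]| <= 2 ^ (n * m))%N.
Proof.
set c := (\prod_(i < a) (2 ^ a - 2 ^ i))%N.
set bad := [set B : 'M['F_2]_(n, m) | _].
pose Y := \matrix_(i < a, j < m) y 0 j.
have step1 : (c * #|bad| <= \sum_(B : 'M['F_2]_(n, m)) #|Ind a (SB U y B)|)%N.
  rewrite mulnC -sum_nat_const.
  apply: (@leq_trans (\sum_(B in bad) #|Ind a (SB U y B)|)).
    apply: leq_sum => B; rewrite inE => hB.
    have S0 : 0 \notin SB U y B by rewrite inE negb_and HU0.
    apply: leq_trans (Ind_ge S0 a); apply: leq_prod => i _.
    have h1 : (0 < 2 ^ i)%N by rewrite expn_gt0.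
    move: hB h1; move: (#|SB U y B|) (2 ^ i)%N (2 ^ a)%N => p q r; lia.
  by rewrite [X in (_ <= X)%N](bigID (mem bad)) /= leq_addr.
have step2 : (\sum_(B : 'M['F_2]_(n, m)) #|Ind a (SB U y B)| =
   \sum_(T in Ind a U) #|[set B : 'M['F_2]_(n, m) | T *m B == Y]|)%N.
  rewrite (eq_bigr (fun B => \sum_(T in Ind a (SB U y B)) 1)%N); last by move=> B _; rewrite sum1_card.
  rewrite (exchange_big_dep (fun T => T \in Ind a U)) /=; last first.
    by move=> B T _; rewrite Ind_SB => /andP [].
  apply: eq_bigr => T TU; rewrite sum1dep_card; apply: eq_card => B.
  by rewrite [B \in _]inE [B \in _]inE Ind_SB TU.
have step3 : ((\sum_(T in Ind a U) #|[set B : 'M['F_2]_(n, m) | T *m B == Y]|) * 2 ^ (a * m)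
    = #|Ind a U| * 2 ^ (n * m))%N.
  rewrite big_distrl /= -sum_nat_const; apply: eq_bigr => T.
  by rewrite inE => /andP [fT _]; rewrite fiber.
have := card_Ind a U; rewrite HU -expnM => hI.
rewrite -(@leq_pmul2r (2 ^ (a * m))) ?expn_gt0 //.
apply: (leq_trans (leq_mul step1 (leqnn _))); rewrite step2 step3.
by rewrite mulnC leq_mul2l (mulnC a m) hI orbT.
Qed.

Section G.
Variable R : realType.
Let p (N : nat) : R := \prod_(j < N) (1 - (2%:R ^- j.+1) : R).

Lemma pS N : p N.+1 = p N * (1 - 2%:R ^- N.+1).
Proof. by rewrite /p big_ord_recr. Qed.

Lemma x_bnd N : 0 < (2%:R : R) ^- N.+1 <= 2^-1.
Proof.
apply/andP; split; first by rewrite invr_gt0 exprn_gt0.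
rewrite lef_pV2 ?posrE ?exprn_gt0 // -[X in X <= _]expr1.
by rewrite ler_eXn2l // ltr1n.
Qed.

Lemma p_ge0 N : 0 <= p N.
Proof.
rewrite /p; apply: prodr_ge0 => j _; have /andP [_ h] := x_bnd j; lra.
Qed.

Lemma xS k : (2%:R : R) ^- k.+1 = 2^-1 * 2 ^- k.
Proof. by rewrite exprS invfM. Qed.

Lemma p_lb N : 1/4 + 2^-(N.+2) <= p N.+1.
Proof.
elim: N => [|N IH].
  rewrite pS /p big_ord0 mul1r [2^- 2]xS !expr1.
  have h : (2%:R : R)^-1 * 2 = 1 by rewrite mulVf.
  lra.
rewrite pS.
have h : (2%:R : R)^-1 * 2 = 1 by rewrite mulVf.
have /andP [x0 x1] := x_bnd N.
rewrite [2^- N.+3]xS [2^- N.+2]xS in IH *.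
set x := 2^- N.+1 in IH x0 x1 *.
nra.
Qed.

Lemma p_ge N : 1/4 <= p N.
Proof.
case: N => [|N]; first by rewrite /p big_ord0; lra.
have := p_lb N; have /andP [h _] := x_bnd N.+1; lra.
Qed.

Lemma p_noninc : nonincreasing_seq p.
Proof.
apply/nonincreasing_seqP => N; rewrite pS.
have := p_ge0 N; have /andP [h1 h2] := x_bnd N; nra.
Qed.

Lemma p_cvg : cvgn p.
Proof.
apply: cvgP (nonincreasing_cvgn p_noninc _).
by exists 0 => _ [N _ <-]; exact: p_ge0.
Qed.

Lemma gamma_facts : 1/4 <= gamma_const R /\ forall N, gamma_const R <= p N.
Proof.
split; last exact: (nonincreasing_cvgn_ge p_noninc p_cvg).
apply: limr_ge; first exact: p_cvg.
by apply: nearW => N; exact: p_ge.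
Qed.
End G.

Unset Implicit Arguments.

Theorem corollary2p3 (R : realType) (n m : nat) (U : {set 'rV['F_2]_n})
  (HU : #|U| = (2 ^ m)%N) (HU0 : 0 \notin U) (y : 'rV['F_2]_m) (a : nat)
  (Ha : (1 <= a)%N) :
  prob_linmap R (fun B : 'M['F_2]_(n, m) => (2 ^ a - 2 < Zcount U y B)%N)
  <= (gamma_const R)^-1 * (2%:R ^- (a * a)).
Proof.
rewrite /prob_linmap.
have mc := main_count HU HU0 y a.
set bad := #|[set B : 'M['F_2]_(n, m) | _]| in mc.
have -> : #|[set B : 'M['F_2]_(n, m) | (2 ^ a - 2 < Zcount U y B)%N]| = bad by [].
rewrite card_M2.
set c := (\prod_(i < a) (2 ^ a - 2 ^ i))%N in mc.
set P := \prod_(j < a) (1 - (2%:R ^- j.+1) : R).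
have cR : (c%:R : R) = 2%:R ^+ (a * a) * P.
  rewrite /c natr_prod (reindex_inj rev_ord_inj) /=.
  rewrite (eq_bigr (fun i : 'I_a => 2%:R ^+ a * (1 - (2%:R ^- i.+1) : R))); last first.
    move=> i _; have ia : (i.+1 <= a)%N := ltn_ord i.
    have e : (2%:R : R) ^+ a = 2%:R ^+ (a - i.+1) * 2%:R ^+ i.+1 by rewrite -exprD subnK.
    rewrite natrB ?leq_pexp2l // ?leq_subr // !natrX e mulrBr mulr1 mulfK //.
  by rewrite big_split /= prodr_const card_ord -exprM.
have [g4 gP] := gamma_facts R.
set g := gamma_const R in g4 gP *.
have gP' : g <= P := gP a.
have g0 : 0 < g by lra.
have q0 : 0 < (2%:R : R) ^+ (a * a) by rewrite exprn_gt0.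
have D0 : 0 < ((2 ^ (n * m))%N%:R : R) by rewrite ltr0n expn_gt0.
have mcR : (c%:R * bad%:R : R) <= (2 ^ (n * m))%N%:R by rewrite -natrM ler_nat.
set q := (2%:R : R) ^+ (a * a) in cR q0 *.
set D := ((2 ^ (n * m))%N%:R : R) in D0 mcR *.
have b0 : 0 <= (bad%:R : R) by rewrite ler0n.
have key : (bad%:R : R) * (g * q) <= D.
  apply: le_trans mcR; rewrite cR.
  have h : 0 <= P - g by rewrite subr_ge0.
  have := mulr_ge0 (mulr_ge0 b0 (ltW q0)) h; nra.
rewrite ler_pdivrMr //.
have -> : g^-1 / q * D = D / (g * q).
  by field; apply/andP; split; apply: lt0r_neq0.
by rewrite ler_pdivlMr // mulr_gt0.
Qed.
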